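(* Let $\Lambda'$, $\Lambda\subset\Lambda'$ and $Z$ be as in the context. Suppose $V$ is a finitely generated $\Lambda'$-module on which $Z$ acts by a character $\omega_V$, and $\sigma$ is a simple $\Lambda'$-module such that $Z$ acts on $\sigma$ by $\omega_\sigma=\omega_V$. Then $V|_\Lambda$ is finitely generated, $\sigma|_\Lambda$ is simple, and $$[V:\sigma]=[V|_\Lambda:\sigma|_\Lambda],$$ where $[V:\sigma]$ denotes the multiplicity of $\sigma$ as a Jordan--Hölder factor of $V$ (and similarly over $\Lambda$).
   Context: Let $\mathbb{F}$ be a field of characteristic $p$, sufficiently large so that all simple modules considered are absolutely simple. $\Lambda'$ is an Artinian $\mathbb F$-algebra, $\Lambda\subset\Lambda'$ a subalgebra, and $Z$ a finite subgroup of the group of units of the center of $\Lambda'$, of order prime to $p$. Put $Y:=Z/(\Lambda\cap Z)$. It is assumed that $\Lambda'$ is a crossed product $\Lambda*Y$: there is a set $\widetilde Y=\{\widetilde y:y\in Y\}$ of units of $\Lambda'$ (the image of a set-theoretic section $Y\to Z$ sending $1$ to $1$) with $|\widetilde Y|=|Y|$, such that $\Lambda'$ is free as a left and as a right $\Lambda$-module with basis $\widetilde Y$, $\widetilde{1_Y}=1$, and for $y_1,y_2\in Y$, $\widetilde{y_1}\Lambda=\Lambda\widetilde{y_1}$ and $\widetilde{y_1}\widetilde{y_2}\Lambda=\widetilde{y_1y_2}\Lambda$. Modules are left modules. A simple $\Lambda'$-module has a central character on $Z$, denoted $\omega_\sigma$. *)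

(* Defs.v *)
From HB Require Import structures.
From mathcomp Require Import all_boot all_order all_algebra all_fingroup.
From mathcomp Require Import boolp.
Set Implicit Arguments. Unset Strict Implicit. Unset Printing Implicit Defensive.
Import GRing.Theory.
Local Open Scope ring_scope.

(* Modules are left modules over the F-algebra L (an [algType F]); a module
   over a subalgebra [A : {pred L}] is a module over L viewed through the
   restricted action of the elements of [A] (restriction of scalars).
   The whole algebra is obtained with [A := predT]. *)

Section Mods.
Variables (F : fieldType) (L : algType F).

Definition left_ideal (I : L -> Prop) : Prop :=
  [/\ I 0, (forall x y, I x -> I y -> I (x + y)) & (forall a x, I x -> I (a * x))].

Definition artinian : Prop :=
  forall I : nat -> L -> Prop, (forall n, left_ideal (I n)) ->
  (forall n x, I n.+1 x -> I n x) ->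
  exists N, forall n, (N <= n)%N -> forall x, I n x <-> I N x.

Definition subalgebra (A : {pred L}) : Prop :=
  [/\ 1 \in A, (forall x y, x \in A -> y \in A -> x + y \in A),
      (forall x y, x \in A -> y \in A -> x * y \in A)
    & (forall (c : F) x, x \in A -> c *: x \in A)].

Variable V : lmodType L.

Definition submod (A : {pred L}) (U : V -> Prop) : Prop :=
  [/\ U 0, (forall u w, U u -> U w -> U (u + w))
    & (forall a u, a \in A -> U u -> U (a *: u))].

Definition fin_gen (A : {pred L}) : Prop :=
  exists (n : nat) (g : 'I_n -> V), forall v : V,
    exists c : 'I_n -> L, (forall i, c i \in A) /\ v = \sum_(i < n) c i *: g i.

Definition simple_mod (A : {pred L}) : Prop :=
  (exists x : V, x != 0) /\
  forall U, submod A U -> (forall x, U x -> x = 0) \/ (forall x, U x).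

Definition acts_by_char (Zt : finGroupType) (iota : Zt -> L) (omega : Zt -> F) :=
  forall (z : Zt) (v : V), iota z *: v = (omega z)%:A *: v.

Definition comp_series (A : {pred L}) (n : nat) (W : nat -> V -> Prop) : Prop :=
  [/\ (forall v, W 0%N v <-> v = 0), (forall v, W n v),
      (forall i, (i <= n)%N -> submod A (W i))
    & forall i, (i < n)%N ->
      [/\ (forall v, W i v -> W i.+1 v), (exists v, W i.+1 v /\ ~ W i v)
        & forall U, submod A U -> (forall v, W i v -> U v) ->
            (forall v, U v -> W i.+1 v) ->
            (forall v, U v <-> W i v) \/ (forall v, U v <-> W i.+1 v)]].

(* The factor W (i+1) / W i is isomorphic, as an A-module, to S: there is an
   A-linear surjection W (i+1) -> S with kernel W i. *)
Definition factor_iso (A : {pred L}) (W : nat -> V -> Prop) (i : nat)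
    (S : lmodType L) : Prop :=
  exists f : V -> S,
    [/\ (forall u w, W i.+1 u -> W i.+1 w -> f (u + w) = f u + f w),
        (forall a u, a \in A -> W i.+1 u -> f (a *: u) = a *: f u),
        (forall x, exists u, W i.+1 u /\ f u = x)
      & (forall u, W i.+1 u -> (f u = 0 <-> W i u))].

Definition jh_count (A : {pred L}) (n : nat) (W : nat -> V -> Prop)
    (S : lmodType L) : nat :=
  #|[set i : 'I_n | `[< factor_iso A W i S >]]|.

End Mods.

(* iota : Zt -> L embeds the finite group Z as a subgroup of the units of the
   centre of L (units follows from being a monoid morphism from a group). *)
Definition central_subgroup (F : fieldType) (L : algType F) (Zt : finGroupType)
    (iota : Zt -> L) : Prop :=
  [/\ injective iota, iota 1%g = 1,
      (forall x y, iota (x * y)%g = iota x * iota y)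
    & (forall z a, iota z * a = a * iota z)].

Definition character (F : fieldType) (Zt : finGroupType) (omega : Zt -> F) :=
  omega 1%g = 1 /\ forall x y, omega (x * y)%g = omega x * omega y.

(* L = A * Y is a crossed product, Y = Z / (A \cap Z).  The section Y -> Z is
   encoded by its image T : a transversal of A \cap Z in Z containing 1;
   tilde y = iota t. *)
Definition crossed_product (F : fieldType) (L : algType F) (A : {pred L})
    (Zt : finGroupType) (iota : Zt -> L) (T : {set Zt}) : Prop :=
  [/\ 1%g \in T,
      (forall z : Zt, exists t, t \in T /\ iota (t^-1 * z)%g \in A)
    & (forall t1 t2, t1 \in T -> t2 \in T -> iota (t1^-1 * t2)%g \in A -> t1 = t2)] /\
  ((forall x : L, exists c : Zt -> L,
      (forall t, c t \in A) /\ x = \sum_(t in T) c t * iota t) /\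
   (forall c : Zt -> L, (forall t, c t \in A) ->
      \sum_(t in T) c t * iota t = 0 -> forall t, t \in T -> c t = 0)) /\
  ((forall x : L, exists c : Zt -> L,
      (forall t, c t \in A) /\ x = \sum_(t in T) iota t * c t) /\
   (forall c : Zt -> L, (forall t, c t \in A) ->
      \sum_(t in T) iota t * c t = 0 -> forall t, t \in T -> c t = 0)) /\
  (forall t a, t \in T -> a \in A -> exists b, b \in A /\ iota t * a = b * iota t) /\
  (forall t a, t \in T -> a \in A -> exists b, b \in A /\ a * iota t = iota t * b) /\
  (* tilde y1 tilde y2 A = tilde(y1 y2) A, where t3 represents the coset of t1 t2 *)
  (forall t1 t2 t3, t1 \in T -> t2 \in T -> t3 \in T ->
     iota (t3^-1 * (t1 * t2))%g \in A ->
     (forall a, a \in A -> exists b, b \in A /\ iota t1 * iota t2 * a = iota t3 * b) /\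
     (forall a, a \in A -> exists b, b \in A /\ iota t3 * a = iota t1 * iota t2 * b)).

(* Main.v *)
Require Import Defs.
From HB Require Import structures.
From mathcomp Require Import all_boot all_order all_algebra all_fingroup.
From mathcomp Require Import boolp.
From mathcomp Require classical_sets.
From mathcomp Require Import zify.
Import GRing.Theory.
Local Open Scope ring_scope.
Set Implicit Arguments. Unset Strict Implicit. Unset Printing Implicit Defensive.

Definition sub T (A B : T -> Prop) := forall x, A x -> B x.

Lemma seteq T (A B : T -> Prop) : sub A B -> sub B A -> A = B.
Proof. by move=> h1 h2; apply: funext => x; apply: propext; split; [apply: h1|apply: h2]. Qed.

Definition dcc T (Q : (T -> Prop) -> Prop) :=
  forall U : nat -> T -> Prop, (forall t, Q (U t)) -> (forall t, sub (U t.+1) (U t)) ->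
  exists N, forall t, (N <= t)%N -> U t = U N.

Lemma dcc_min T (Q P : (T -> Prop) -> Prop) : dcc Q -> (forall X, P X -> Q X) ->
  (exists X, P X) -> exists X, P X /\ forall Y, P Y -> sub Y X -> Y = X.
Proof.
move=> dQ PQ [X0 PX0].
case: (pselect (exists X, P X /\ forall Y, P Y -> sub Y X -> Y = X)) => // nex.
have H : forall X : {X | P X}, exists Y : {Y | P Y}, sub (proj1_sig Y) (proj1_sig X) /\ proj1_sig Y <> proj1_sig X.
  move=> [X PX] /=.
  case: (pselect (exists Y, P Y /\ sub Y X /\ Y <> X)) => [[Y [PY [s n]]]|nY].
    by exists (exist _ Y PY).
  exfalso; apply: nex; exists X; split => // Y PY sYX.
  case: (pselect (Y = X)) => // ne; exfalso; apply: nY; by exists Y.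
pose nx (X : {X | P X}) := sval (cid (H X)).
have nxP X : sub (proj1_sig (nx X)) (proj1_sig X) /\ proj1_sig (nx X) <> proj1_sig X by rewrite /nx; case: cid.
pose U t := proj1_sig (iter t nx (exist _ X0 PX0)).
have [|t|N HN] := dQ U.
- by move=> t; apply: PQ; rewrite /U; exact: proj2_sig.
- by rewrite /U /= ; case: (nxP (iter t nx (exist _ X0 PX0))).
have := HN N.+1 (leqnSn N); rewrite /U /=.
by case: (nxP (iter N nx (exist _ X0 PX0))).
Qed.

Lemma zorn_max T (P : (T -> Prop) -> Prop) X0 : P X0 ->
  (forall Fm : (T -> Prop) -> Prop, (exists X, Fm X) -> (forall X, Fm X -> P X) ->
     (forall X Y, Fm X -> Fm Y -> sub X Y \/ sub Y X) ->
     P (fun x => exists X, Fm X /\ X x)) ->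
  exists A, [/\ P A, sub X0 A & forall B, P B -> sub A B -> B = A].
Proof.
move=> PX0 Hch.
pose P3 := fun Y : T -> Prop => Y = (fun _ => False) \/ (P Y /\ sub X0 Y).
have := @classical_sets.Zorn_bigcup T P3.
case.
- move=> Fm FP tot.
  case: (pselect (exists X, Fm X /\ exists x, X x)) => [[X [FX [x Xx]]]|nne].
  + right.
    have PF : P (fun x => exists X, (Fm X /\ (P X /\ sub X0 X)) /\ X x).
      apply: Hch.
      * case: (FP X FX) => [eX|[PX sX]]; first by move: Xx; rewrite eX.
        by exists X.
      * by move=> Y [_ []].
      * move=> Y Z [FY _] [FZ _]; case: (tot Y Z FY FZ) => h; [left|right] => u; exact: h.
    have -> : classical_sets.bigcup Fm id = (fun x => exists X, (Fm X /\ (P X /\ sub X0 X)) /\ X x).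
      apply: seteq => u.
        move=> [Y FY Yu]; exists Y; split => //; split => //.
        by case: (FP Y FY) => // eY; move: Yu; rewrite eY.
      by move=> [Y [[FY _] Yu]]; exists Y.
    split => //.
    move=> u X0u.
    case: (FP X FX) => [eX|[PX sX]]; first by move: Xx; rewrite eX.
    exists X; split; last by apply: sX.
    by split.
  + left; apply: seteq => u // [Y FY Yu].
    by apply: nne; exists Y; split => //; exists u.
- move=> A [PA Amax].
  case: PA => [eA|[PA sA]].
  + case: (pselect (exists u, X0 u)) => [[u X0u]|nX].
      have P3X0 : P3 X0 by rewrite /P3; right; split.
      exfalso; apply: (Amax X0 _ P3X0).
      split; first by rewrite eA.
      by move/(_ u X0u); rewrite eA.
    have e0 : X0 = (fun _ => False) by apply: seteq => u // X0u; apply: nX; exists u.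
    exists X0; split => //.
    move=> B PB sB.
    apply: seteq => // u Bu; exfalso.
    have P3B : P3 B by rewrite /P3; right; split => // v; rewrite e0.
    apply: (Amax B _ P3B).
    split; first by rewrite eA.
    by move=> hh; move: (hh u Bu); rewrite eA.
  + exists A; split => // B PB sAB.
    apply: seteq => // u Bu.
    case: (pselect (A u)) => // nAu; exfalso.
    have P3B : P3 B by rewrite /P3; right; split => // v /sA /sAB.
    apply: (Amax B _ P3B).
    by split => // hh; apply: nAu; apply: hh.
Qed.

Section Ring.
Variables (F : fieldType) (L : algType F).

Lemma lidN (I : L -> Prop) x : left_ideal I -> I x -> I (- x).
Proof. by case=> _ _ hm Ix; rewrite -mulN1r; apply: hm. Qed.

Lemma lid_all (I : L -> Prop) : left_ideal I -> I 1 -> forall x, I x.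
Proof. by case=> _ _ hm I1 x; rewrite -(mulr1 x); apply: hm. Qed.

Definition linv (x : L) := exists b, b * x = 1.
Definition Jr (y : L) := forall a, linv (1 - a * y).

Lemma linv_swap u v : linv (1 - u * v) -> linv (1 - v * u).
Proof.
move=> [w hw]; exists (1 + v * w * u).
have e : v * w * u * (1 - v * u) = v * (w * (1 - u * v)) * u.
  by rewrite !mulrBr !mulrBl !mulr1 !mulrA.
by rewrite mulrDl mul1r e hw mulr1 subrK.
Qed.

Lemma J0 : Jr 0.
Proof. by move=> a; exists 1; rewrite mulr0 subr0 mulr1. Qed.

Lemma JD y z : Jr y -> Jr (z) -> Jr (y + z).
Proof.
move=> Jy Jz a; have [u hu] := Jy a; have [v hv] := Jz (u * a).
exists (v * u).
by rewrite (mulrDr a) opprD addrA -mulrA mulrBr hu mulrA hv.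
Qed.

Lemma JM a y : Jr y -> Jr (a * y).
Proof. by move=> Jy b; rewrite mulrA; apply: Jy. Qed.

Lemma JMr y c : Jr y -> Jr (y * c).
Proof. by move=> Jy a; rewrite mulrA; apply: linv_swap; rewrite mulrA; apply: Jy. Qed.

Lemma J_lid : left_ideal Jr.
Proof. by split; [exact: J0|exact: JD|exact: JM]. Qed.

Lemma J_kill y x : Jr y -> x = y * x -> x = 0.
Proof.
move=> Jy ex; have [b hb] := Jy 1; move: hb; rewrite mul1r => hb.
by rewrite -[x]mul1r -hb -mulrA mulrBl mul1r -ex subrr mulr0.
Qed.

Inductive Prod : nat -> L -> Prop :=
| Prod0 x : Prod 0 x
| ProdS k y x : Jr y -> Prod k x -> Prod k.+1 (y * x).

Lemma ProdS_inv k x : Prod k.+1 x -> exists y x', [/\ Jr y, Prod k x' & x = y * x'].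
Proof. by move=> h; inversion h; exists y, x0. Qed.

Lemma Prod_lmul k a x : Prod k x -> Prod k (a * x).
Proof. by case=> [z|k' y z Jy Pz]; [constructor|rewrite mulrA; constructor => //; apply: JM]. Qed.

Lemma Prod_rmul k x c : Prod k x -> Prod k (x * c).
Proof. by elim=> [z|k' y z Jy Pz IH]; [constructor|rewrite -mulrA; constructor]. Qed.

Lemma Prod_down k x : Prod k.+1 x -> Prod k x.
Proof.
elim: k x => [|k IH] x; first by constructor.
by move/ProdS_inv=> [y [x' [Jy Px' ->]]]; constructor => //; apply: IH.
Qed.

Lemma Prod_split k m z : Prod (k + m) z -> exists p q, [/\ z = p * q, Prod k p & Prod m q].
Proof.
elim: k z => [|k IH] z.
  by move=> h; exists 1, z; split => //; [rewrite mul1r|constructor].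
rewrite addSn => /ProdS_inv [y [z' [Jy Pz' ->]]].
have [p [q [-> Pp Pq]]] := IH _ Pz'.
by exists (y * p), q; split => //; [rewrite mulrA|constructor].
Qed.

Lemma Prod_J k x : Prod k.+1 x -> Jr x.
Proof. by move/ProdS_inv=> [y [x' [Jy _ ->]]]; apply: JMr. Qed.

Inductive span (S : L -> Prop) : L -> Prop :=
| sp0 : span S 0
| spin x : S x -> span S x
| spD x y : span S x -> span S y -> span S (x + y).

Lemma span_mulr S z x : span S z -> z * x != 0 -> exists2 s, S s & s * x != 0.
Proof.
elim=> [|y Sy|y1 y2 _ IH1 _ IH2]; first by rewrite mul0r eqxx.
  by exists y.
rewrite mulrDl => h.
case: (eqVneq (y1 * x) 0) => [e|]; last exact: IH1.
by apply: IH2; move: h; rewrite e add0r.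
Qed.

Lemma span_lid S : (forall a x, S x -> S (a * x)) -> left_ideal (span S).
Proof.
move=> hS; split; [exact: sp0|exact: spD|].
move=> a x; elim=> [|y Sy|y1 y2 _ IH1 _ IH2].
- by rewrite mulr0; apply: sp0.
- by apply: spin; apply: hS.
- by rewrite mulrDr; apply: spD.
Qed.

Lemma span_sub (S S' : L -> Prop) : sub S S' -> sub (span S) (span S').
Proof.
move=> h x; elim=> [|y Sy|y1 y2 _ IH1 _ IH2]; [exact: sp0|apply: spin; exact: h|exact: spD].
Qed.

Hypothesis art : artinian L.

Lemma dcc_lid : dcc (@left_ideal F L).
Proof.
move=> U hU hdec; have [N HN] := art hU hdec.
by exists N => t Nt; apply: seteq => x /(HN t Nt x).
Qed.

Definition Ik k := span (Prod k).

Lemma nilJ : exists M, (0 < M)%N /\ forall s, Prod M s -> s = 0.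
Proof.
have [N HN] := dcc_lid (U := Ik) (fun k => span_lid (@Prod_lmul k))
  (fun k => span_sub (@Prod_down k)).
exists N.+1; split => // s0 Ps0.
case: (pselect (s0 = 0)) => // ns0; exfalso.
have eI : Ik (N.+1 + N.+1) = Ik N.+1.
  rewrite (HN (N.+1 + N.+1)) ?(HN N.+1) //; lia.
pose P K := left_ideal K /\ exists x s, [/\ K x, Prod N.+1 s & s * x != 0].
have [|K [[lK [x [s [Kx Ps sx]]]] Kmin]] := dcc_min dcc_lid (P := P) (fun X h => h.1).
  exists (fun _ => True); split; first by split.
  by exists 1, s0; split => //; rewrite mulr1; apply/eqP.
have : Ik (N.+1 + N.+1) s by rewrite eI; apply: spin.
move/span_mulr => /(_ x sx) [t Pt tx].
have [p [q [et Pp Pq]]] := Prod_split Pt.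
pose K' := fun v => exists a, v = a * (q * x).
have lK' : left_ideal K'.
  split.
  - by exists 0; rewrite mul0r.
  - by move=> u w [a ->] [b ->]; exists (a + b); rewrite mulrDl.
  - by move=> a u [b ->]; exists (a * b); rewrite mulrA.
have PK' : P K'.
  split => //; exists (q * x), p; split => //; first by exists 1; rewrite mul1r.
  by rewrite mulrA -et.
have sK' : sub K' K.
  move=> v [a ->]; case: lK => _ _ hm.
  by apply: (hm); apply: (hm).
have eK := Kmin K' PK' sK'.
have : K' x by rewrite eK.
case=> a ex.
have x0 : x = 0.
  by apply: (@J_kill (a * q)); [apply: JM; apply: (Prod_J Pq)|rewrite -mulrA].
by move: tx; rewrite x0 mulr0 eqxx.
Qed.

End Ring.

Section Ring2.
Variables (F : fieldType) (L : algType F).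

Definition maxl (m : L -> Prop) :=
  [/\ left_ideal m, ~ m 1 & forall K, left_ideal K -> sub m K -> K = m \/ K 1].

Lemma exists_maxl (I : L -> Prop) : left_ideal I -> ~ I 1 -> exists m, maxl m /\ sub I m.
Proof.
move=> lI nI1.
have [|A [[lA nA1] sIA Amax]] := @zorn_max L (fun K => left_ideal K /\ ~ K 1) I (conj lI nI1).
  move=> Fm [X FX] FP tot; split; last first.
    by move=> [Y [FY Y1]]; case: (FP Y FY) => _; apply.
  split.
  - by exists X; split => //; case: (FP X FX) => [[]].
  - move=> u w [Y [FY Yu]] [Z [FZ Zw]].
    case: (tot Y Z FY FZ) => h.
      by exists Z; split => //; case: (FP Z FZ) => [[_ hD _] _]; apply: hD => //; apply: h.
    by exists Y; split => //; case: (FP Y FY) => [[_ hD _] _]; apply: hD => //; apply: h.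
  - move=> a u [Y [FY Yu]]; exists Y; split => //.
    by case: (FP Y FY) => [[_ _ hM] _]; apply: hM.
exists A; split => //; split => // K lK sAK.
case: (pselect (K 1)) => K1; [by right|left].
exact: Amax.
Qed.

Lemma J_sub_maxl m y : maxl m -> Jr y -> m y.
Proof.
move=> [lm nm1 mmax] Jy; case: (pselect (m y)) => // nmy; exfalso.
pose K := fun v => exists u a, m u /\ v = u + a * y.
have lK : left_ideal K.
  case: (lm) => m0 mD mM.
  split.
  - by exists 0, 0; rewrite mul0r addr0.
  - move=> _ _ [u [a [mu ->]]] [u' [a' [mu' ->]]].
    exists (u + u'), (a + a'); split; first exact: mD.
    by rewrite mulrDl addrACA.
  - move=> b _ [u [a [mu ->]]]; exists (b * u), (b * a); split; first exact: mM.
    by rewrite mulrDr mulrA.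
have sK : sub m K by move=> u mu; exists u, 0; rewrite mul0r addr0.
case: (mmax K lK sK) => [eK|[u [a [mu e1]]]].
  by apply: nmy; rewrite -eK; exists 0, 1; rewrite mul1r add0r; split => //; case: lm.
have [b hb] := Jy a; apply: nm1.
have eu : 1 - a * y = u by rewrite e1 addrK.
by rewrite -hb eu; case: lm => _ _; apply.
Qed.

Lemma maxl_sub_J y : (forall m, maxl m -> m y) -> Jr y.
Proof.
move=> H a; case: (pselect (linv (1 - a * y))) => // nl; exfalso.
pose I := fun v => exists b, v = b * (1 - a * y).
have lI : left_ideal I.
  split.
  - by exists 0; rewrite mul0r.
  - by move=> _ _ [b ->] [c ->]; exists (b + c); rewrite mulrDl.
  - by move=> c _ [b ->]; exists (c * b); rewrite mulrA.
have nI1 : ~ I 1 by move=> [b e]; apply: nl; exists b.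
have [m [mm sIm]] := exists_maxl lI nI1.
case: (mm) => [[m0 mD mM] nm1 _]; apply: nm1.
have -> : (1 : L) = (1 - a * y) + a * y by rewrite subrK.
apply: mD; first by apply: sIm; exists 1; rewrite mul1r.
by apply: mM; apply: H.
Qed.

Definition capf r (f : 'I_r -> L -> Prop) := fun x => forall i, f i x.

Lemma capf_lid r (f : 'I_r -> L -> Prop) : (forall i, left_ideal (f i)) -> left_ideal (capf f).
Proof.
move=> h; split.
- by move=> i; case: (h i).
- by move=> u w hu hw i; case: (h i) => _ hD _; apply: hD.
- by move=> a u hu i; case: (h i) => _ _ hM; apply: hM.
Qed.

Hypothesis art : artinian L.

Lemma J_fin : exists r (f : 'I_r -> L -> Prop), (forall i, maxl (f i)) /\ Jr (L:=L) = capf f.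
Proof.
pose P X := exists r (f : 'I_r -> L -> Prop), (forall i, maxl (f i)) /\ X = capf f.
have PQ : forall X, P X -> left_ideal X.
  by move=> X [r [f [mf ->]]]; apply: capf_lid => i; case: (mf i).
have exP : exists X, P X.
  by exists (capf (fun _ : 'I_0 => fun _ => True)), 0%N, (fun _ : 'I_0 => fun _ => True); split => // [[]].
have [X0 [[r [f [mf ->]]] Xmin]] := dcc_min (dcc_lid art) PQ exP.
exists r, f; split => //; apply: seteq => y.
  by move=> Jy i; apply: J_sub_maxl.
move=> X0y; apply: maxl_sub_J => m mm.
pose f' := fun i : 'I_r.+1 => if unlift ord_max i is Some j then f j else m.
have Pf' : P (capf f').
  exists r.+1, f'; split => // i; rewrite /f'.
  by case: unlift.
have s' : sub (capf f') (capf f).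
  by move=> x hx j; have := hx (lift ord_max j); rewrite /f' liftK.
have e := Xmin _ Pf' s'.
by have := (eq_ind_r (fun Z => Z y) X0y e) ord_max; rewrite /f' unlift_none.
Qed.

Lemma J_irr : exists r (f : 'I_r -> L -> Prop), [/\ forall i, maxl (f i), Jr (L:=L) = capf f &
   forall i, exists e, (forall j, j != i -> f j e) /\ f i (1 - e)].
Proof.
pose Q (r : nat) := exists f : 'I_r -> L -> Prop, (forall i, maxl (f i)) /\ Jr (L:=L) = capf f.
have exQ : exists r, `[< Q r >] by have [r [f h]] := J_fin; exists r; apply/asboolP; exists f.
case: (ex_minnP exQ) => r /asboolP [f [mf eJ]] rmin.
exists r, f; split => // i.
case: (pselect (exists e, (forall j, j != i -> f j e) /\ f i (1 - e))) => // ne; exfalso.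
have sN : forall x, (forall j, j != i -> f j x) -> f i x.
  move=> x Nx; case: (pselect (f i x)) => // nfx; exfalso; apply: ne.
  case: (mf i) => [[m0 mD mM] nm1 mmax].
  pose K := fun v => exists u a, f i u /\ v = u + a * x.
  have lK : left_ideal K.
    split.
    - by exists 0, 0; rewrite mul0r addr0.
    - move=> _ _ [u [a [mu ->]]] [u' [a' [mu' ->]]].
      exists (u + u'), (a + a'); split; first exact: mD.
      by rewrite mulrDl addrACA.
    - move=> b _ [u [a [mu ->]]]; exists (b * u), (b * a); split; first exact: mM.
      by rewrite mulrDr mulrA.
  have sK : sub (f i) K by move=> u mu; exists u, 0; rewrite mul0r addr0.
  case: (mmax K lK sK) => [eK|[u [a [mu e1]]]].
    by exfalso; apply: nfx; rewrite -eK; exists 0, 1; rewrite mul1r add0r; split.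
  exists (a * x); split.
    by move=> j nj; case: (mf j) => [[_ _ hM] _ _]; apply: hM; apply: Nx.
  by rewrite e1 addrK.
clear ne; move: i sN; case: r f mf eJ rmin => [|r] f mf eJ rmin i sN; first by case: (i).
have : (r < r.+1)%N by [].
rewrite ltnNge => /negP; apply; apply: rmin; apply/asboolP.
exists (fun k => f (lift i k)); split => //.
rewrite eJ; apply: seteq => x hx.
  by move=> k; apply: hx.
move=> j; case: (eqVneq j i) => [->|nji].
  apply: sN => j' nj'.
  have nij : i != j' by rewrite eq_sym.
  have [k -> _] := unlift_some nij.
  exact: hx.
have [k ->] : exists k, j = lift i k.
  by case: (unliftP i j) => [k ->|e]; [exists k|by move: nji; rewrite e eqxx].
exact: hx.
Qed.

Definition stepI (C D : L -> Prop) :=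
  sub C D /\ forall K, left_ideal K -> sub C K -> sub K D -> K = C \/ K = D.

Lemma step_cap (N m : L -> Prop) : left_ideal N -> maxl m -> stepI (fun x => N x /\ m x) N.
Proof.
move=> lN [lm nm1 mmax]; split; first by move=> x [].
move=> K lK sK sKN.
pose K2 := fun v => exists u k, m u /\ K k /\ v = u + k.
have lK2 : left_ideal K2.
  case: lm => m0 mD mM; case: lK => k0 kD kM.
  split.
  - by exists 0, 0; rewrite addr0.
  - move=> _ _ [u [a [mu [ka ->]]]] [u' [a' [mu' [ka' ->]]]].
    exists (u + u'), (a + a'); split; first exact: mD.
    by split; [exact: kD|rewrite addrACA].
  - move=> b _ [u [a [mu [ka ->]]]]; exists (b * u), (b * a); split; first exact: mM.
    by split; [exact: kM|rewrite mulrDr].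
have smK2 : sub m K2 by move=> u mu; exists u, 0; split => //; split; [case: lK|rewrite addr0].
case: (mmax K2 lK2 smK2) => [eK2|[u [k [mu [Kk e1]]]]].
  left; apply: seteq => // x Kx; split; first exact: sKN.
  by rewrite -eK2; exists 0, x; split; [case: lm|split => //; rewrite add0r].
right; apply: seteq => // x Nx.
have -> : x = x * u + x * k by rewrite -mulrDr -e1 mulr1.
case: lK => k0 kD kM; apply: kD; last exact: kM.
have mxu : m (x * u) by case: lm => _ _; apply.
apply: sK; split => //.
have -> : x * u = x - x * k by rewrite -[in X in X - _](mulr1 x) e1 mulrDr addrK.
case: (lN) => _ nD nM; apply: nD => //; apply: (lidN lN); apply: nM; exact: sKN.
Qed.

End Ring2.

Section Mod.
Variables (F : fieldType) (L : algType F) (V : lmodType L).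

Definition sm (U : V -> Prop) :=
  [/\ U 0, (forall u w, U u -> U w -> U (u + w)) & (forall (a : L) u, U u -> U (a *: u))].

Lemma smN U u : sm U -> U u -> U (- u).
Proof. by case=> _ _ hM Uu; rewrite -scaleN1r; apply: hM. Qed.

Lemma smB U u w : sm U -> U u -> U w -> U (u - w).
Proof. by move=> hU Uu Uw; case: (hU) => _ hD _; apply: hD => //; apply: smN. Qed.

Lemma smD U u w : sm U -> U u -> U w -> U (u + w).
Proof. by case=> _ hD _; apply: hD. Qed.

Lemma smZ U a u : sm U -> U u -> U (a *: u).
Proof. by case=> _ _ hM; apply: hM. Qed.

Lemma sm0 U : sm U -> U 0.
Proof. by case. Qed.

Definition zero : V -> Prop := fun v => v = 0.
Definition full : V -> Prop := fun _ => True.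

Lemma sm_zero : sm zero.
Proof. by split => [|u w -> ->|a u ->]; rewrite ?addr0 ?scaler0. Qed.

Lemma sm_full : sm full.
Proof. by []. Qed.

Definition addS (A B : V -> Prop) := fun v => exists a b, [/\ A a, B b & v = a + b].
Definition capS (A B : V -> Prop) := fun v => A v /\ B v.

Lemma sm_addS A B : sm A -> sm B -> sm (addS A B).
Proof.
move=> hA hB; split.
- by exists 0, 0; rewrite addr0; split => //; apply: sm0.
- move=> _ _ [a [b [Aa Bb ->]]] [a' [b' [Aa' Bb' ->]]].
  by exists (a + a'), (b + b'); split; [apply: smD|apply: smD|rewrite addrACA].
- move=> c _ [a [b [Aa Bb ->]]]; exists (c *: a), (c *: b).
  by split; [apply: smZ|apply: smZ|rewrite scalerDr].
Qed.

Lemma sm_capS A B : sm A -> sm B -> sm (capS A B).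
Proof.
move=> hA hB; split.
- by split; apply: sm0.
- by move=> u w [] ? ? [] ? ?; split; apply: smD.
- by move=> c u [] ? ?; split; apply: smZ.
Qed.

Lemma addS_l A B : sm B -> sub A (addS A B).
Proof. by move=> hB a Aa; exists a, 0; rewrite addr0; split => //; apply: sm0. Qed.

Lemma addS_r A B : sm A -> sub B (addS A B).
Proof. by move=> hA b Bb; exists 0, b; rewrite add0r; split => //; apply: sm0. Qed.

Lemma addS_min A B C : sm C -> sub A C -> sub B C -> sub (addS A B) C.
Proof. by move=> hC sA sB _ [a [b [Aa Bb ->]]]; apply: smD => //; [apply: sA|apply: sB]. Qed.

Definition stepM (A B : V -> Prop) :=
  [/\ sm A, sm B, sub A B & forall X, sm X -> sub A X -> sub X B -> X = A \/ X = B].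

Definition Uw (U : V -> Prop) (D : L -> Prop) (w : V) :=
  fun v => exists u d, [/\ U u, D d & v = u + d *: w].

Lemma sm_Uw U D w : sm U -> left_ideal D -> sm (Uw U D w).
Proof.
move=> hU [d0 dD dM]; split.
- by exists 0, 0; rewrite scale0r addr0; split => //; apply: sm0.
- move=> _ _ [u [d [Uu Dd ->]]] [u' [d' [Uu' Dd' ->]]].
  exists (u + u'), (d + d'); split; [exact: smD|exact: dD|].
  by rewrite scalerDl addrACA.
- move=> a _ [u [d [Uu Dd ->]]]; exists (a *: u), (a * d); split; [exact: smZ|exact: dM|].
  by rewrite scalerDr scalerA.
Qed.

Lemma Cw_step U C D w : sm U -> left_ideal C -> left_ideal D -> stepI C D ->
  (forall c, C c -> U (c *: w)) -> stepM U (Uw U D w).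
Proof.
move=> hU lC lD [sCD Cmax] hCw; split => //; first exact: sm_Uw.
  by move=> u Uu; exists u, 0; rewrite scale0r addr0; split => //; case: lD.
move=> X hX sUX sXU.
pose Dx := fun a => D a /\ X (a *: w).
have lDx : left_ideal Dx.
  case: (lD) => d0 dD dM; split.
  - by split => //; rewrite scale0r; apply: sm0.
  - by move=> a b [Da Xa] [Db Xb]; split; [apply: dD|rewrite scalerDl; apply: smD].
  - by move=> a b [Db Xb]; split; [apply: dM|rewrite -scalerA; apply: smZ].
have sC : sub C Dx by move=> c Cc; split; [apply: sCD|apply: sUX; apply: hCw].
case: (Cmax Dx lDx sC (fun a h => h.1)) => [e|e]; [left|right]; last first.
  apply: seteq => // _ [u [d [Uu Dd ->]]]; apply: smD => //; first exact: sUX.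
  by have [] : Dx d by rewrite e.
apply: seteq => // x Xx.
have := sXU x Xx => -[u [d [Uu Dd ex]]].
have Xd : X (d *: w).
  have -> : d *: w = x - u by rewrite ex (addrC u) addrK.
  by apply: smB => //; apply: sUX.
have : Dx d by [].
rewrite e => Cd; rewrite ex; apply: smD => //; exact: hCw.
Qed.

End Mod.

Section Mod2.
Variables (F : fieldType) (L : algType F) (V : lmodType L).
Hypothesis art : artinian L.

Definition dccIn (M : V -> Prop) := dcc (fun U => sm U /\ sub U M).

Lemma chain_mono T (U : nat -> T -> Prop) : (forall t, sub (U t.+1) (U t)) ->
  forall s t, (s <= t)%N -> sub (U t) (U s).
Proof.
move=> h s t /subnK <-; elim: (t - s)%N => [|k IH] //= x.
by rewrite addSn => /h /IH.
Qed.

Lemma dcc_zero : dccIn (@zero _ _ V).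
Proof.
move=> U hU _; exists 0%N => t _; apply: seteq => x.
  by case: (hU t) => _ /(_ x) h /h ->; case: (hU 0%N) => /sm0.
by case: (hU 0%N) => _ /(_ x) h /h ->; case: (hU t) => /sm0.
Qed.

Lemma dcc_addL M w : sm M -> dccIn M -> dccIn (Uw M (fun _ => True) w).
Proof.
move=> hM dM U hU hdec.
have [N1 HN1] := dM (fun t => capS (U t) M)
  (fun t => conj (sm_capS (hU t).1 hM) (fun x h => proj2 h))
  (fun t x h => conj (hdec t x (proj1 h)) (proj2 h)).
pose I t := fun a : L => exists u m, [/\ U t u, M m & u = m + a *: w].
have lI : forall t, left_ideal (I t).
  move=> t; case: (hU t) => hUt _; split.
  - by exists 0, 0; rewrite scale0r addr0; split => //; apply: sm0.
  - move=> a b [u [m [Uu Mm eu]]] [u' [m' [Uu' Mm' eu']]].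
    exists (u + u'), (m + m'); split; [exact: smD|exact: smD|].
    by rewrite eu eu' scalerDl addrACA.
  - move=> c a [u [m [Uu Mm eu]]]; exists (c *: u), (c *: m).
    by split; [exact: smZ|exact: smZ|rewrite eu scalerDr scalerA].
have [N2 HN2] := dcc_lid art lI
  (fun t a => fun '(ex_intro u (ex_intro m (And3 Uu Mm e))) =>
     ex_intro _ u (ex_intro _ m (And3 (hdec t u Uu) Mm e))).
exists (maxn N1 N2) => t ht; apply: seteq; first exact: chain_mono.
move=> u UNu.
have : Uw M (fun _ => True) w u by case: (hU (maxn N1 N2)) => _; apply.
case=> m [a [Mm _ eu]].
have : I t a.
  rewrite (HN2 t) ?(leq_trans (leq_maxr N1 N2) ht) //.
  rewrite -(HN2 (maxn N1 N2)) ?leq_maxr //.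
  by exists u, m.
case=> u' [m' [Uu' Mm' eu']].
have hUt := (hU t).1.
have : capS (U (maxn N1 N2)) M (u - u').
  split.
    apply: smB => //; first exact: (hU _).1.
    by apply: (chain_mono hdec ht).
  by rewrite eu eu' opprD addrACA subrr addr0; apply: smB.
have h1 : capS (U (maxn N1 N2)) M = capS (U N1) M := HN1 _ (leq_maxl N1 N2).
have h2 : capS (U t) M = capS (U N1) M := HN1 _ (leq_trans (leq_maxl N1 N2) ht).
rewrite h1 -h2; case=> hu _.
have -> : u = u' + (u - u') by rewrite addrC subrK.
by apply: smD.
Qed.

Fixpoint spanL (s : seq V) : V -> Prop :=
  if s is w :: s' then Uw (spanL s') (fun _ => True) w else @zero _ _ V.

Lemma spanL_sm s : sm (spanL s) /\ dccIn (spanL s).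
Proof.
elim: s => [|w s [h1 h2]] /=; first by split; [exact: sm_zero|exact: dcc_zero].
split; [apply: sm_Uw => //|exact: dcc_addL].
Qed.

Lemma dcc_V : fin_gen V predT -> dcc (@sm _ _ V).
Proof.
move=> [n [g hg]].
have mem : forall (r : seq 'I_n) (c : 'I_n -> L), spanL (map g r) (\sum_(i <- r) c i *: g i).
  move=> r c; elim: r => [|i r IH] /=; first by rewrite big_nil.
  by rewrite big_cons; exists (\sum_(j <- r) c j *: g j), (c i); split => //; rewrite addrC.
have all : forall v, spanL (map g (index_enum 'I_n)) v.
  by move=> v; have [c [_ ->]] := hg v; apply: mem.
have [_ dS] := spanL_sm (map g (index_enum 'I_n)).
move=> U hU hdec.
exact: (dS U (fun t => conj (hU t) (fun x _ => all x)) hdec).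
Qed.

End Mod2.

Section Mod3.
Variables (F : fieldType) (L : algType F) (V : lmodType L).
Hypothesis art : artinian L.
Hypothesis fg : fin_gen V predT.

Inductive spanV (S : V -> Prop) : V -> Prop :=
| sv0 : spanV S 0
| svin v : S v -> spanV S v
| svD u v : spanV S u -> spanV S v -> spanV S (u + v).

Lemma spanV_sm S : (forall a v, S v -> S (a *: v)) -> sm (spanV S).
Proof.
move=> hS; split; [exact: sv0|exact: svD|].
move=> a u; elim=> [|v Sv|u1 u2 _ IH1 _ IH2].
- by rewrite scaler0; apply: sv0.
- by apply: svin; apply: hS.
- by rewrite scalerDr; apply: svD.
Qed.

Lemma spanV_sub S S' : sm S' -> sub S S' -> sub (spanV S) S'.
Proof.
move=> hS' h x; elim=> [|v Sv|u1 u2 _ IH1 _ IH2]; [exact: sm0|exact: h|exact: smD].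
Qed.

Definition Vk k := spanV (fun v => exists s u, Prod k s /\ v = s *: u).

Lemma Vk_sm k : sm (Vk k).
Proof.
apply: spanV_sm => a _ [s [u [Ps ->]]]; exists (a * s), u; split; first exact: Prod_lmul.
by rewrite scalerA.
Qed.

Lemma Vk_dec k : sub (Vk k.+1) (Vk k).
Proof.
apply: spanV_sub; first exact: Vk_sm.
by move=> _ [s [u [Ps ->]]]; apply: svin; exists s, u; split => //; apply: Prod_down.
Qed.

Lemma Vk_J k y v : Jr y -> Vk k v -> Vk k.+1 (y *: v).
Proof.
move=> Jy; elim=> [|_ [s [u [Ps ->]]]|u1 u2 _ IH1 _ IH2].
- by rewrite scaler0; apply: sv0.
- by apply: svin; exists (y * s), u; split; [constructor|rewrite scalerA].
- by rewrite scalerDr; apply: svD.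
Qed.

Lemma Vk0 : Vk 0 = @full _ _ V.
Proof.
apply: seteq => // v _; apply: svin; exists 1, v; split; [constructor|by rewrite scale1r].
Qed.

Lemma VkM : exists M, Vk M = @zero _ _ V.
Proof.
have [M [_ hM]] := nilJ art; exists M; apply: seteq.
  apply: spanV_sub; first exact: sm_zero.
  by move=> _ [s [u [Ps ->]]]; rewrite (hM s Ps) scale0r.
by move=> v ->; apply: sv0.
Qed.

Variable r : nat.
Variable f : 'I_r -> L -> Prop.
Hypothesis mf : forall i, maxl (f i).
Hypothesis eJ : Jr (L:=L) = capf f.
Variable e : 'I_r -> L.
Hypothesis he : forall i, (forall j, j != i -> f j (e i)) /\ f i (1 - e i).

Definition NN i := fun x => forall j, j != i -> f j x.

Lemma NN_lid i : left_ideal (NN i).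
Proof.
split.
- by move=> j _; case: (mf j) => [[]].
- by move=> u w hu hw j nj; case: (mf j) => [[_ hD _] _ _]; apply: hD; [apply: hu|apply: hw].
- by move=> a u hu j nj; case: (mf j) => [[_ _ hM] _ _]; apply: hM; apply: hu.
Qed.

Lemma stepJN i : stepI (@Jr _ L) (NN i).
Proof.
have -> : Jr (L:=L) = (fun x => NN i x /\ f i x).
  rewrite eJ; apply: seteq => x.
    by move=> h; split => [j _|]; apply: h.
  by move=> [h1 h2] j; case: (eqVneq j i) => [->|nj] //; apply: h1.
exact: step_cap (NN_lid i) (mf i).
Qed.

Lemma J_e : Jr (1 - \sum_i e i).
Proof.
rewrite eJ => j.
have lj : left_ideal (f j) by case: (mf j).
rewrite (bigD1 j) //= opprD addrA.
case: (lj) => _ hD _; apply: hD; first exact: (he j).2.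
apply: (lidN lj); apply: (big_ind (f j)).
- by case: lj.
- by move=> x y; case: lj => _ hD' _; apply: hD'.
- by move=> i nij; apply: (he i).1; rewrite eq_sym.
Qed.

Lemma killed_decomp (A Y : V -> Prop) (w : V) : sm A -> sm Y -> sub A Y -> (forall y, Jr y -> A (y *: w)) ->
  (forall i, sub (Uw A (NN i) w) Y) -> Y w.
Proof.
move=> hA hY sAY hJ hi.
have -> : w = (1 - \sum_i e i) *: w + \sum_i (e i *: w).
  by rewrite scalerBl scale1r scaler_suml subrK.
apply: smD => //; first by apply: sAY; apply: hJ; apply: J_e.
apply: (big_ind Y); [exact: sm0|by move=> x y; apply: smD|].
move=> i _; apply: (hi i); exists 0, (e i); split => //; [exact: sm0|exact: (he i).1|by rewrite add0r].
Qed.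

Lemma semis (A X : V -> Prop) : sm A -> sm X -> sub A X -> (forall y v, Jr y -> X v -> A (y *: v)) -> ~ sub X A ->
   exists Y, [/\ sub A Y, sub Y X, ~ sub X Y & stepM Y X].
Proof.
move=> hA hX sAX hJ nXA.
have Sstep : forall w, X w -> forall i, stepM A (Uw A (NN i) w).
  by move=> w Xw i; apply: Cw_step => //; [exact: J_lid|exact: NN_lid|exact: stepJN|move=> c Jc; apply: hJ].
have SX : forall w, X w -> forall i, sub (Uw A (NN i) w) X.
  by move=> w Xw i _ [u [d [Au _ ->]]]; apply: smD => //; [apply: sAX|apply: smZ].
have [w [Xw nAw]] : exists w, X w /\ ~ A w.
  case: (pselect (exists w, X w /\ ~ A w)) => // nw; exfalso; apply: nXA => w Xw.
  by case: (pselect (A w)) => // nAw; exfalso; apply: nw; exists w.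
have [i nSA] : exists i, ~ sub (Uw A (NN i) w) A.
  case: (pselect (exists i, ~ sub (Uw A (NN i) w) A)) => // ni; exfalso; apply: nAw.
  apply: (@killed_decomp A A w) => // [y Jy|j]; first by apply: hJ.
  by case: (pselect (sub (Uw A (NN j) w) A)) => // nj; exfalso; apply: ni; exists j.
set S := Uw A (NN i) w.
have stS : stepM A S := Sstep w Xw i.
have SX' : sub S X := SX w Xw i.
pose P Y := [/\ sm Y, sub A Y, sub Y X & forall v, Y v -> S v -> A v].
have PA : P A by split.
have Pch : forall Fm : (V -> Prop) -> Prop, (exists X, Fm X) -> (forall X, Fm X -> P X) ->
     (forall X Y, Fm X -> Fm Y -> sub X Y \/ sub Y X) ->
     P (fun x => exists X, Fm X /\ X x).
  move=> Fm [X0 FX0] FP tot; split.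
  + split.
    * by exists X0; split => //; case: (FP X0 FX0) => /sm0.
    * move=> u v [Y1 [F1 u1]] [Y2 [F2 v2]].
      case: (tot Y1 Y2 F1 F2) => h.
        by exists Y2; split => //; case: (FP Y2 F2) => h2 _ _ _; apply: smD => //; apply: h.
      by exists Y1; split => //; case: (FP Y1 F1) => h2 _ _ _; apply: smD => //; apply: h.
    * by move=> a u [Y1 [F1 u1]]; exists Y1; split => //; case: (FP Y1 F1) => h1 _ _ _; apply: smZ.
  + by move=> x Ax; exists X0; split => //; case: (FP X0 FX0) => _ h _ _; apply: h.
  + by move=> x [Y1 [F1 x1]]; case: (FP Y1 F1) => _ _ h _; apply: h.
  + by move=> v [Y1 [F1 v1]] Sv; case: (FP Y1 F1) => _ _ _ h; apply: h.
have [Ym [[hYm sAY sYX hYS] _ Ymax]] := zorn_max PA Pch.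
have full : forall x, X x -> addS Ym S x.
  move=> x Xx; case: (pselect (addS Ym S x)) => // nYS; exfalso.
  have hYS' : sm (addS Ym S) by apply: sm_addS => //; case: stS.
  have [j nS'] : exists j, ~ sub (Uw A (NN j) x) (addS Ym S).
    case: (pselect (exists j, ~ sub (Uw A (NN j) x) (addS Ym S))) => // nj; exfalso; apply: nYS.
    apply: (@killed_decomp A) => // [u Au|y Jy|j]; first by apply: addS_l; [case: stS|apply: sAY].
      by apply: hJ.
    by case: (pselect (sub (Uw A (NN j) x) (addS Ym S))) => // nj'; exfalso; apply: nj; exists j.
  set S' := Uw A (NN j) x.
  have stS' : stepM A S' := Sstep x Xx j.
  case: (stS') => _ hS' sAS' maxS'.
  have hZ : sm (capS (addS Ym S) S') by apply: sm_capS.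
  have hS : sm S by case: stS.
  have sAZ : sub A (capS (addS Ym S) S').
    by move=> v Av; split; [apply: (addS_l (B := S) hS); apply: sAY|apply: sAS'].
  have ZA : forall v, addS Ym S v -> S' v -> A v.
    case: (maxS' _ hZ sAZ (fun v h => proj2 h)) => eZ.
      by move=> v h1 h2; have : capS (addS Ym S) S' v by []; rewrite eZ.
    exfalso; apply: nS' => v S'v.
    have hv : capS (addS Ym S) S' v by rewrite eZ.
    by case: hv.
  have PY' : P (addS Ym S').
    split.
    - exact: sm_addS.
    - by move=> v Av; apply: (addS_l (B := S') hS'); apply: sAY.
    - by apply: addS_min => //; apply: SX.
    - move=> _ [y [s' [Yy S's' ->]]] Sv.
      have As' : A s'.
        apply: ZA => //; exists (- y), (y + s'); split => //; first exact: smN.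
        by rewrite addKr.
      by apply: hYS => //; apply: smD => //; apply: sAY.
  have eY := Ymax _ PY' (addS_l hS').
  apply: nS' => v S'v.
  have : addS Ym S' v by apply: (addS_r hYm).
  by rewrite eY => Yv; apply: (addS_l hS).
have hS : sm S by case: stS.
exists Ym; split => //.
  move=> sXY; apply: nSA => v Sv; apply: hYS => //; apply: sXY; exact: SX'.
split => // Z hZ sYZ sZX.
have hZS : sm (capS Z S) by apply: sm_capS.
case: stS => _ _ sAS maxS.
case: (maxS _ hZS (fun v Av => conj (sYZ v (sAY v Av)) (sAS v Av)) (fun v h => proj2 h)) => eZ.
  left; apply: seteq => // z Zz.
  have [y [s [Yy Ss ez]]] := full z (sZX z Zz).
  have es : s = z - y by rewrite ez (addrC y) addrK.
  have Zs : Z s by rewrite es; apply: smB => //; apply: sYZ.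
  have : capS Z S s by [].
  by rewrite eZ => As; rewrite ez; apply: smD => //; apply: sAY.
right; apply: seteq => // x Xx.
have [y [s [Yy Ss ->]]] := full x Xx.
apply: smD => //; first exact: sYZ.
have h : capS Z S s by rewrite eZ.
by case: h.
Qed.

End Mod3.

Section Mod4.
Variables (F : fieldType) (L : algType F) (V : lmodType L).
Hypothesis art : artinian L.
Hypothesis fg : fin_gen V predT.

Inductive reach (A : V -> Prop) : (V -> Prop) -> Prop :=
| rrefl : reach A A
| rstep B C : reach A B -> stepM B C -> reach A C.

Lemma reach_trans A B C : reach A B -> reach B C -> reach A C.
Proof. by move=> hAB; elim=> [|C' D _ IH st] //; apply: rstep IH st. Qed.

Lemma semis' (A X : V -> Prop) : sm A -> sm X -> sub A X ->
  (forall y v, Jr y -> X v -> A (y *: v)) -> ~ sub X A ->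
  exists Y, [/\ sub A Y, sub Y X, ~ sub X Y & stepM Y X].
Proof.
have [r [f [mf eJ he]]] := J_irr art.
pose e i := sval (cid (he i)).
have he' : forall i, (forall j, j != i -> f j (e i)) /\ f i (1 - e i).
  by move=> i; rewrite /e; case: cid.
exact: (semis mf eJ he').
Qed.

Lemma killed_reach (A B : V -> Prop) : sm A -> sm B -> sub A B ->
  (forall y v, Jr y -> B v -> A (y *: v)) -> reach A B.
Proof.
move=> hA hB sAB hJ.
pose P X := [/\ sm X, sub A X, sub X B & reach X B].
have PQ : forall X, P X -> sm X by move=> X [].
have exP : exists X, P X by exists B; split => //; exact: rrefl.
have [X [[hX sAX sXB rX] Xmin]] := dcc_min (dcc_V art fg) PQ exP.
case: (pselect (sub X A)) => [sXA|nXA].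
  have eX : X = A by apply: seteq.
  by rewrite -eX.
have [Y [sAY sYX nXY stY]] := semis' hA hX sAX (fun y v Jy Xv => hJ y v Jy (sXB v Xv)) nXA.
have PY : P Y.
  split => //; first by case: stY.
    by move=> v /sYX /sXB.
  by apply: reach_trans rX; apply: rstep stY; apply: rrefl.
by have eY := Xmin Y PY sYX; exfalso; apply: nXY; rewrite eY.
Qed.

Lemma reach_V : reach (@zero _ _ V) (@full _ _ V).
Proof.
have [M eM] := VkM V art.
have h : forall k, reach (@Vk _ _ V k) (@Vk _ _ V 0).
  elim=> [|k IH]; first exact: rrefl.
  apply: reach_trans IH; apply: killed_reach; [exact: Vk_sm|exact: Vk_sm|exact: Vk_dec|].
  by move=> y v Jy; apply: Vk_J.
by rewrite -eM -Vk0.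
Qed.

Definition chainP n (W : nat -> V -> Prop) (B : V -> Prop) :=
  [/\ W 0%N = @zero _ _ V, W n = B, (forall i, (i <= n)%N -> sm (W i)) &
   forall i, (i < n)%N -> [/\ sub (W i) (W i.+1), (exists v, W i.+1 v /\ ~ W i v) &
     forall U, sm U -> sub (W i) U -> sub U (W i.+1) -> U = W i \/ U = W i.+1]].

Lemma reach_chain B : reach (@zero _ _ V) B -> exists n W, chainP n W B.
Proof.
elim=> [|B' C _ [n [W [W0 Wn Wsm Wst]]] [hB hC sBC Cmax]].
  by exists 0%N, (fun _ => @zero _ _ V); split => // i _; exact: sm_zero.
case: (pselect (sub C B')) => [sCB|nCB].
  have eC : C = B' by apply: seteq.
  by exists n, W; rewrite eC.
exists n.+1, (fun i => if (i <= n)%N then W i else C); split => /=.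
- by rewrite ?leq0n.
- by rewrite ?ltnn.
- move=> i; case: ifP => [h _|_ _] //; exact: Wsm.
- move=> i; rewrite ltnS leq_eqVlt => /orP [/eqP ->|lin].
    rewrite ?leqnn ?ltnn ?eqxx /= Wn; split => //.
    case: (pselect (exists v, C v /\ ~ B' v)) => // nv; exfalso; apply: nCB => v Cv.
    by case: (pselect (B' v)) => // nW; exfalso; apply: nv; exists v.
  have l1 : (i <= n)%N := ltnW lin.
  by rewrite lin orbT; apply: Wst.
Qed.

Lemma sm_submod (U : V -> Prop) : sm U <-> submod predT U.
Proof. by split; case=> h0 hD hM; split => // a u; [move=> _; apply: hM|apply: hM]. Qed.

Lemma exists_cs : exists n W, comp_series (V := V) predT n W.
Proof.
have [n [W [W0 Wn Wsm Wst]]] := reach_chain reach_V.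
exists n, W; split.
- by move=> v; rewrite W0.
- by move=> v; rewrite Wn.
- by move=> i hi; apply/sm_submod; apply: Wsm.
- move=> i hi; have [s1 s2 s3] := Wst i hi; split => // U /sm_submod hU h1 h2.
  by case: (s3 U hU h1 h2) => ->; [left|right].
Qed.

End Mod4.

Section JH.
Variables (F : fieldType) (L : algType F) (V : lmodType L) (A : {pred L}).
Hypothesis hA1 : (-1 : L) \in A.


Section Gen.
Implicit Types (U : V -> Prop).
Lemma sA0 U : submod A U -> U 0. Proof. by case. Qed.
Lemma sAD U u w : submod A U -> U u -> U w -> U (u + w). Proof. by case=> _ h _; apply: h. Qed.
Lemma sAZ U a u : submod A U -> a \in A -> U u -> U (a *: u). Proof. by case=> _ _ h; apply: h. Qed.
Lemma sAN U u : submod A U -> U u -> U (- u).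
Proof. by move=> hU Uu; rewrite -scaleN1r; apply: sAZ. Qed.
Lemma sAB U u w : submod A U -> U u -> U w -> U (u - w).
Proof. by move=> hU Uu Uw; apply: sAD => //; apply: sAN. Qed.

Definition addA U1 U2 := fun v => exists a b, [/\ U1 a, U2 b & v = a + b].
Definition capA U1 U2 := fun v => U1 v /\ U2 v.

Lemma sm_addA U1 U2 : submod A U1 -> submod A U2 -> submod A (addA U1 U2).
Proof.
move=> h1 h2; split.
- by exists 0, 0; rewrite addr0; split => //; apply: sA0.
- move=> _ _ [a [b [Aa Bb ->]]] [a' [b' [Aa' Bb' ->]]].
  by exists (a + a'), (b + b'); split; [apply: sAD|apply: sAD|rewrite addrACA].
- move=> c _ cA [a [b [Aa Bb ->]]]; exists (c *: a), (c *: b).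
  by split; [apply: sAZ|apply: sAZ|rewrite scalerDr].
Qed.

Lemma sm_capA U1 U2 : submod A U1 -> submod A U2 -> submod A (capA U1 U2).
Proof.
move=> h1 h2; split.
- by split; apply: sA0.
- by move=> u w [] ? ? [] ? ?; split; apply: sAD.
- by move=> c u cA [] ? ?; split; apply: sAZ.
Qed.

Definition isoF B0 B1 (S : lmodType L) :=
  exists f : V -> S,
    [/\ (forall u w, B1 u -> B1 w -> f (u + w) = f u + f w),
        (forall a u, a \in A -> B1 u -> f (a *: u) = a *: f u),
        (forall x, exists u, B1 u /\ f u = x)
      & (forall u, B1 u -> (f u = 0 <-> B0 u))].

Lemma factor_isoF W i S : factor_iso A W i S <-> isoF (W i) (W i.+1) S.
Proof. by []. Qed.

Lemma iso_transfer (B0 B1 P Q : V -> Prop) (S : lmodType L) : submod A B0 -> submod A B1 -> submod A P ->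
  sub B0 B1 -> sub P B1 -> (forall x, B1 x -> exists b p, [/\ B0 b, P p & x = b + p]) ->
  (forall p, P p -> (B0 p <-> Q p)) ->
  isoF B0 B1 S <-> isoF Q P S.
Proof.
move=> hB0 hB1 hP sB0 sPB dec PBQ; split.
  move=> [f [fD fZ fS fK]]; exists f; split.
  - by move=> u w Pu Pw; apply: fD; apply: sPB.
  - by move=> a u aA Pu; apply: fZ => //; apply: sPB.
  - move=> x; have [u [B1u <-]] := fS x.
    have [b [p [B0b Pp ->]]] := dec u B1u.
    exists p; split => //.
    have fb : f b = 0 by apply/(fK b (sB0 b B0b)).
    by rewrite fD ?fb ?add0r //; [apply: sB0|apply: sPB].
  - by move=> u Pu; rewrite fK ?PBQ //; apply: sPB.
move=> [g [gD gZ gS gK]].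
have H : forall x, exists bp : V * V, B1 x -> [/\ B0 bp.1, P bp.2 & x = bp.1 + bp.2].
  move=> x; case: (pselect (B1 x)) => [B1x|nB1x]; last by exists (0, 0).
  by have [b [p [B0b Pp ex]]] := dec x B1x; exists (b, p).
pose pp x := (sval (cid (H x))).2.
have ppP : forall x, B1 x -> exists b, [/\ B0 b, P (pp x) & x = b + pp x].
  move=> x B1x; rewrite /pp; case: cid => [[b p]] /= h.
  by have [B0b Pp ex] := h B1x; exists b.
have key : forall x b p, B0 b -> P p -> x = b + p -> g (pp x) = g p.
  move=> x b p B0b Pp ex.
  have B1x : B1 x by rewrite ex; apply: sAD => //; [apply: sB0|apply: sPB].
  have [b' [B0b' Pp' ex']] := ppP x B1x.
  have Pd : P (p - pp x) by apply: sAB.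
  have B0d : B0 (p - pp x).
    have -> : p - pp x = b' - b.
      apply/eqP; rewrite subr_eq addrAC -ex' ex.
      by rewrite [b + p]addrC addrK.
    exact: sAB.
  have gd : g (p - pp x) = 0 by apply/(gK _ Pd)/PBQ.
  have ep : p = pp x + (p - pp x) by rewrite addrC subrK.
  by rewrite [in RHS]ep gD // gd addr0.
exists (fun x => g (pp x)); split.
- move=> u w B1u B1w.
  have [b1 [B0b1 Pp1 e1]] := ppP u B1u; have [b2 [B0b2 Pp2 e2]] := ppP w B1w.
  rewrite (key (u + w) (b1 + b2) (pp u + pp w)); first by rewrite gD.
  + exact: sAD.
  + exact: sAD.
  + by rewrite {1}e1 {1}e2 addrACA.
- move=> a u aA B1u; have [b1 [B0b1 Pp1 e1]] := ppP u B1u.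
  rewrite (key (a *: u) (a *: b1) (a *: pp u)); first by rewrite gZ.
  + exact: sAZ.
  + exact: sAZ.
  + by rewrite {1}e1 scalerDr.
- move=> x; have [p [Pp <-]] := gS x; exists p; split; first exact: sPB.
  by apply: (key p 0 p) => //; [apply: sA0|rewrite add0r].
- move=> u B1u; have [b1 [B0b1 Pp1 e1]] := ppP u B1u.
  rewrite gK // -PBQ //; split => h.
    by rewrite e1; apply: sAD.
  have -> : pp u = u - b1 by rewrite {2}e1 (addrC b1) addrK.
  exact: sAB.
Qed.

End Gen.

End JH.

Section JH2.
Variables (F : fieldType) (L : algType F) (V : lmodType L) (A : {pred L}).
Hypothesis hA1 : (-1 : L) \in A.

Definition Pset (W W' : nat -> V -> Prop) i j := fun v => W i.+1 v /\ W' j.+1 v.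
Definition Qset (W W' : nat -> V -> Prop) i j := fun v =>
  exists a b, [/\ W i a /\ W' j.+1 a, W i.+1 b /\ W' j b & v = a + b].
Definition jump (W W' : nat -> V -> Prop) i j :=
  sub (fun v => W i.+1 v /\ W' j v) (W i) /\ ~ sub (Pset W W' i j) (W i).
Definition Rr (W W' : nat -> V -> Prop) i j := exists v, Pset W W' i j v /\ ~ Qset W W' i j v.

Lemma P_sym W W' i j : Pset W' W j i = Pset W W' i j.
Proof. by apply: seteq => v []. Qed.

Lemma Q_sym W W' i j : Qset W' W j i = Qset W W' i j.
Proof.
apply: seteq => v [a [b [[h1 h1'] [h2 h2'] ->]]]; exists b, a; split => //; by rewrite addrC.
Qed.

Lemma R_sym W W' i j : Rr W' W j i <-> Rr W W' i j.
Proof. by rewrite /Rr P_sym Q_sym. Qed.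

Section CS.
Variables (n : nat) (W : nat -> V -> Prop).
Hypothesis cW : comp_series A n W.

Lemma cs_sm i : (i <= n)%N -> submod A (W i).
Proof. by case: cW => _ _ h _; apply: h. Qed.

Lemma cs_step i : (i < n)%N -> sub (W i) (W i.+1).
Proof. by case: cW => _ _ _ h /h [] s _ _ v; apply: s. Qed.

Lemma cs_mono i k : (i <= k)%N -> (k <= n)%N -> sub (W i) (W k).
Proof.
move=> /subnK <-; elim: (k - i)%N => [|d IH] hk v Wv; first by rewrite add0n.
rewrite addSn; apply: cs_step; first by rewrite -addSn.
by apply: IH => //; apply: ltnW; rewrite -addSn.
Qed.

Lemma cs_max i : (i < n)%N -> forall U, submod A U -> sub (W i) U -> sub U (W i.+1) ->
  (forall v, U v <-> W i v) \/ (forall v, U v <-> W i.+1 v).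
Proof. by case: cW => _ _ _ h /h [] _ _; apply. Qed.

Lemma cs_strict i : (i < n)%N -> exists v, W i.+1 v /\ ~ W i v.
Proof. by case: cW => _ _ _ h /h []. Qed.

Lemma cs_0 v : W 0%N v -> v = 0.
Proof. by case: cW => h _ _ _ /h. Qed.

Lemma cs_n v : W n v.
Proof. by case: cW. Qed.

End CS.

Section Pair.
Variables (n m : nat) (W W' : nat -> V -> Prop).
Hypothesis cW : comp_series A n W.
Hypothesis cW' : comp_series A m W'.

Lemma jump_R i j : (i < n)%N -> (j < m)%N -> jump W W' i j -> Rr W W' i j.
Proof.
move=> hi hj [s1 nP].
have [v [Pv nWv]] : exists v, Pset W W' i j v /\ ~ W i v.
  case: (pselect (exists v, Pset W W' i j v /\ ~ W i v)) => // nv; exfalso; apply: nP => v Pv.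
  by case: (pselect (W i v)) => // nW; exfalso; apply: nv; exists v.
exists v; split => // -[a [b [[Wa _] [Wb W'b] ev]]]; apply: nWv; rewrite ev.
by apply: (@sAD _ _ _ A); [apply: (cs_sm cW); apply: ltnW|done|apply: s1].
Qed.

Lemma R_jump i j : (i < n)%N -> (j < m)%N -> Rr W W' i j -> jump W W' i j.
Proof.
move=> hi hj [v [[Wv W'v] nQ]].
have hWi := cs_sm cW (ltnW hi); have hWi1 := cs_sm cW hi.
have hW'j := cs_sm cW' (ltnW hj); have hW'j1 := cs_sm cW' hj.
have nWv : ~ W i v.
  move=> Wiv; apply: nQ; exists v, 0; split => //; last by rewrite addr0.
  by split; [apply: (sA0 hWi1)|apply: (sA0 hW'j)].
split; last by move=> h; apply: nWv; apply: h.
move=> b0 [Wb0 W'b0]; case: (pselect (W i b0)) => // nb0; exfalso.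
pose Z := addA (W i) (capA (W i.+1) (W' j)).
have hZ : submod A Z by apply: sm_addA => //; apply: sm_capA.
have sWZ : sub (W i) Z by move=> u Wu; exists u, 0; split => //; [split; apply: (@sA0 _ _ _ A)|rewrite addr0].
have sZW : sub Z (W i.+1).
  move=> _ [a [b [Wa [Wb _] ->]]]; apply: (@sAD _ _ _ A) => //; exact: (cs_step cW hi).
case: (cs_max cW hi hZ sWZ sZW) => h.
  by apply: nb0; apply/h; exists 0, b0; split => //; [apply: (@sA0 _ _ _ A)|rewrite add0r].
have [a [b [Wa [Wb W'b] ev]]] : Z v by apply/h.
apply: nQ; exists a, b; split => //; split => //.
have -> : a = v - b by rewrite ev addrK.
by apply: (@sAB _ _ _ A) => //; apply: (cs_step cW' hj).
Qed.

Lemma jump_ex i : (i < n)%N -> exists j, (j < m)%N /\ jump W W' i j.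
Proof.
move=> hi.
pose g k := `[< sub (fun v => W i.+1 v /\ W' k v) (W i) >].
have gm : ~~ g m.
  apply/negP => /asboolP h; have [v [Wv nWv]] := cs_strict cW hi.
  by apply: nWv; apply: h; split => //; apply: (cs_n cW').
have ex : exists k, ~~ g k by exists m.
case: (ex_minnP ex) => k0 nk0 k0min.
have k0m : (k0 <= m)%N by apply: k0min.
have g0 : g 0%N.
  apply/asboolP => v [_ /(cs_0 cW') ->]; apply: (@sA0 _ _ _ A); apply: (cs_sm cW); exact: ltnW.
case: k0 nk0 k0min k0m => [|j] nk0 k0min k0m; first by rewrite g0 in nk0.
exists j; split => //; split.
  apply/asboolP; case: (boolP (g j)) => // ngj.
  by have := k0min j ngj; rewrite ltnn.
by move=> h; move: nk0; rewrite /g; case: asboolP.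
Qed.

Lemma jump_lt i j j' : (j' <= m)%N -> jump W W' i j -> jump W W' i j' -> (j < j')%N -> False.
Proof.
move=> hj' [_ nP] [s' _] ltjj'.
have [v [Pv nWv]] : exists v, Pset W W' i j v /\ ~ W i v.
  case: (pselect (exists v, Pset W W' i j v /\ ~ W i v)) => // nv; exfalso; apply: nP => v Pv.
  by case: (pselect (W i v)) => // nW; exfalso; apply: nv; exists v.
apply: nWv; apply: s'; split; first by case: Pv.
by apply: (cs_mono cW' ltjj' hj'); case: Pv.
Qed.

Lemma jump_uniq i j j' : (j <= m)%N -> (j' <= m)%N -> jump W W' i j -> jump W W' i j' -> j = j'.
Proof.
move=> hj hj' h h'; case: (ltngtP j j') => // lt; exfalso.
  exact: (jump_lt hj' h h' lt).
exact: (jump_lt hj h' h lt).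
Qed.

Lemma factor_jump i j (S : lmodType L) : (i < n)%N -> (j < m)%N -> jump W W' i j ->
  factor_iso A W i S <-> isoF A (Qset W W' i j) (Pset W W' i j) S.
Proof.
move=> hi hj [s1 nP].
have hWi := cs_sm cW (ltnW hi); have hWi1 := cs_sm cW hi.
have hW'j := cs_sm cW' (ltnW hj); have hW'j1 := cs_sm cW' hj.
have hP : submod A (Pset W W' i j) by apply: sm_capA.
rewrite factor_isoF; apply: (iso_transfer hA1 S hWi hWi1 hP).
- exact: (cs_step cW hi).
- by move=> v [].
- move=> x Wx.
  pose Z := addA (W i) (Pset W W' i j).
  have hZ : submod A Z by apply: sm_addA.
  have sWZ : sub (W i) Z by move=> u Wu; exists u, 0; split => //; [split; [exact: (sA0 hWi1)|exact: (sA0 hW'j1)]|rewrite addr0].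
  have sZW : sub Z (W i.+1).
    by move=> _ [a [b [Wa [Wb _] ->]]]; apply: (@sAD _ _ _ A) => //; exact: (cs_step cW hi).
  case: (cs_max cW hi hZ sWZ sZW) => h; last by apply/h.
  by exfalso; apply: nP => v Pv; apply/h; exists 0, v; split => //; [exact: (sA0 hWi)|rewrite add0r].
- move=> p [Wp W'p]; split.
    move=> Wip; exists p, 0; split => //; last by rewrite addr0.
    by split; apply: (@sA0 _ _ _ A).
  move=> [a [b [[Wa _] [Wb W'b] ->]]]; apply: (@sAD _ _ _ A) => //; exact: s1.
Qed.

End Pair.

Lemma JH_count n m (W W' : nat -> V -> Prop) (S : lmodType L) : comp_series A n W -> comp_series A m W' ->
  jh_count A n W S = jh_count A m W' S.
Proof.
move=> cW cW'.
have exphi : forall i : 'I_n, exists j : 'I_m, jump W W' i j.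
  by move=> i; have [j [hj h]] := jump_ex cW cW' (ltn_ord i); exists (Ordinal hj).
have expsi : forall j : 'I_m, exists i : 'I_n, jump W' W j i.
  by move=> j; have [i [hi h]] := jump_ex cW' cW (ltn_ord j); exists (Ordinal hi).
pose phi i := sval (cid (exphi i)); pose psi j := sval (cid (expsi j)).
have phiP : forall i : 'I_n, jump W W' i (phi i) by move=> i; rewrite /phi; case: cid.
have psiP : forall j : 'I_m, jump W' W j (psi j) by move=> j; rewrite /psi; case: cid.
have swap1 : forall i : 'I_n, jump W' W (phi i) i.
  move=> i; apply: (R_jump cW' cW (ltn_ord _) (ltn_ord _)); apply/(R_sym W W').
  exact: (jump_R cW (ltn_ord i) (ltn_ord (phi i)) (phiP i)).
have swap2 : forall j : 'I_m, jump W W' (psi j) j.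
  move=> j; apply: (R_jump cW cW' (ltn_ord _) (ltn_ord _)); apply/(R_sym W' W).
  exact: (jump_R cW' (ltn_ord j) (ltn_ord (psi j)) (psiP j)).
have psiK : cancel phi psi.
  move=> i; apply: val_inj => /=.
  by apply: (jump_uniq cW (i := phi i)); [apply: ltnW|apply: ltnW|apply: psiP|apply: swap1].
have phiK : cancel psi phi.
  move=> j; apply: val_inj => /=.
  by apply: (jump_uniq cW' (i := psi j)); [apply: ltnW|apply: ltnW|apply: phiP|apply: swap2].
have isoE : forall i : 'I_n, factor_iso A W i S <-> factor_iso A W' (phi i) S.
  move=> i; rewrite (factor_jump cW cW' S (ltn_ord i) (ltn_ord (phi i)) (phiP i)).
  by rewrite (factor_jump cW' cW S (ltn_ord (phi i)) (ltn_ord i) (swap1 i)) P_sym Q_sym.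
rewrite /jh_count.
have -> : [set j : 'I_m | `[< factor_iso A W' j S >]] = phi @: [set i : 'I_n | `[< factor_iso A W i S >]].
  apply/setP => j; rewrite inE; apply/idP/imsetP.
    move=> /asboolP h; exists (psi j); last by rewrite phiK.
    by rewrite inE; apply/asboolP/isoE; rewrite phiK.
  by case=> i; rewrite inE => /asboolP h ->; apply/asboolP/isoE.
by rewrite card_imset //; exact: can_inj psiK.
Qed.

End JH2.

Unset Implicit Arguments. Set Strict Implicit. Set Printing Implicit Defensive.

Theorem corollary5p5 (F : fieldType) (p : nat) (L : algType F) (Lam : {pred L})
    (Zt : finGroupType) (iota : Zt -> L) (T : {set Zt}) (omega : Zt -> F)
    (V sigma : lmodType L) :
  prime p -> p \in [pchar F] ->
  artinian L -> subalgebra Lam ->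
  central_subgroup iota -> coprime #|Zt| p ->
  crossed_product Lam iota T ->
  character omega ->
  fin_gen V predT -> acts_by_char V iota omega ->
  simple_mod sigma predT -> acts_by_char sigma iota omega ->
  [/\ fin_gen V Lam,
      simple_mod sigma Lam,
      (exists n W, comp_series (V := V) predT n W)
    & forall n W m W', comp_series (V := V) predT n W -> comp_series (V := V) Lam m W' ->
        jh_count predT n W sigma = jh_count Lam m W' sigma].
Proof.
move=> _ _ art [L1 LD LM LZ] _ _ [_ [[gen _] _]] _ fgV actV simS actS.
have L0 : (0 : L) \in Lam by rewrite -(scale0r (1 : L)); apply: LZ.
have LN1 : (-1 : L) \in Lam by rewrite -scaleN1r; apply: LZ.
have key : forall x : L, exists a, [/\ a \in Lam, (forall v : V, x *: v = a *: v)
     & (forall s : sigma, x *: s = a *: s)].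
  move=> x; have [c [cL ->]] := gen x.
  exists (\sum_(t in T) omega t *: c t); split.
  - by apply: (big_ind (fun y => y \in Lam)) => // t _; apply: LZ.
  - move=> v; rewrite !scaler_suml; apply: eq_bigr => t _.
    by rewrite -scalerA actV scalerA mulr_algr.
  - move=> v; rewrite !scaler_suml; apply: eq_bigr => t _.
    by rewrite -scalerA actS scalerA mulr_algr.
have ka : forall x : L, {a | [/\ a \in Lam, (forall v : V, x *: v = a *: v)
     & (forall s : sigma, x *: s = a *: s)]} := fun x => cid (key x).
have subV : forall U : V -> Prop, submod Lam U <-> submod predT U.
  move=> U; split; case=> h0 hD hM; split => //.
    by move=> a u _ Uu; case: (ka a) => a' [a'L e1 _]; rewrite e1; apply: hM.
  by move=> a u _; apply: hM.
have subS : forall U : sigma -> Prop, submod Lam U -> submod predT U.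
  move=> U [h0 hD hM]; split => //.
  by move=> a u _ Uu; case: (ka a) => a' [a'L _ e2]; rewrite e2; apply: hM.
split.
- case: fgV => n [g hg]; exists n, g => v.
  have [c [_ ->]] := hg v.
  exists (fun i => sval (ka (c i))); split; first by move=> i; case: (ka (c i)) => ? [].
  by apply: eq_bigr => i _; case: (ka (c i)) => a' [_ e1 _] /=; rewrite e1.
- case: simS => nz hS; split => // U /subS; exact: hS.
- exact: exists_cs.
move=> n W m W' cW cW'.
have cWL : comp_series (V := V) Lam n W.
  case: cW => c1 c2 c3 c4; split => //.
    by move=> i hi; apply/subV; apply: c3.
  move=> i hi; have [d1 d2 d3] := c4 i hi; split => // U /subV; exact: d3.
rewrite -(JH_count LN1 sigma cWL cW').
rewrite /jh_count; apply: eq_card => i; rewrite !inE.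
apply/asboolP/asboolP => -[f [f1 f2 f3 f4]]; exists f; split => //.
  by move=> a u _; apply: f2.
move=> a u _ Wu; case: (ka a) => a' [a'L e1 e2].
by rewrite e1 e2; apply: f2.
Qed.
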